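(* Let $\Sigma=(\mathbb{N}_0,X,U,\mathscr{U},\phi)$ be a control system as in the standing setup (in particular $\mathscr U$ is a compact metrizable space and $\phi$ is continuous), and let $Q\subset X$ be a compact control set with nonempty interior. Then the following are equivalent: (1) $Q$ is equi-invariant; (2) $Q$ is finitely equi-invariant; (3) $Q$ has bounded invariance complexity.
   Context: Standing setup: $(X,d)$ is a metric space, $U$ is a compact metric space, and $F:X\times U\to X$ is a map such that $F_u:=F(\cdot,u)$ is continuous for every $u\in U$. Let $\mathscr U=U^{\mathbb N_0}$ with the product topology. For $\omega=(\omega_0,\omega_1,\dots)\in\mathscr U$, $x\in X$, set $\phi(0,x,\omega)=x$ and $\phi(k,x,\omega)=F_{\omega_{k-1}}\circ\cdots\circ F_{\omega_0}(x)$ for $k\ge1$. It is assumed that $\phi:\mathbb N_0\times X\times\mathscr U\to X$ is continuous. Notation: $\mathbb N=\{1,2,\dots\}$; $B(x,\delta)$ is the open ball; $d(y,Q)=\inf_{q\in Q}d(y,q)$; $B_\varepsilon(Q)=\{y:d(y,Q)<\varepsilon\}$; $\phi(A,x,\omega)=\{\phi(k,x,\omega):k\in A\}$. Control set: $D\subset X$ is a control set if (i) for every $x\in D$ there is $\omega\in\mathscr U$ with $\phi(\mathbb N_0,x,\omega)\subset D$; (ii) for every $x\in D$, $D\subset\operatorname{cl}\mathcal O^+(x)$, where $\mathcal O^+(x)=\{\phi(m,x,\omega):m\in\mathbb N_0,\omega\in\mathscr U\}$; (iii) $D$ is maximal with (i) and (ii). Equi-invariance: $x\in Q$ is a finitely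 equi-invariant point of $Q$ if for every $\varepsilon>0$ there exist $\delta>0$ and a finite set $F\subset\mathscr U$ such that for every $y\in B(x,\delta)\cap Q$ there is $\omega\in F$ with $\phi(\mathbb N_0,y,\omega)\subset B_\varepsilon(Q)$; it is an equi-invariant point if this holds with $F$ a singleton. $Q$ is (finitely) equi-invariant if every point of $Q$ is a (finitely) equi-invariant point. Invariance complexity: $Q^\varepsilon_{n,\omega}=\{x\in Q:\phi(\{0,\dots,n-1\},x,\omega)\subset B_\varepsilon(Q)\}$; $F\subset\mathscr U$ is $(n,\varepsilon,Q)$-spanning if $Q=\bigcup_{\omega\in F}Q^\varepsilon_{n,\omega}$; $r_{inv}(n,\varepsilon,Q)$ is the minimal cardinality of such $F$; $Q$ has bounded invariance complexity if for every $\varepsilon>0$ there is $C$ with $r_{inv}(n,\varepsilon,Q)\le C$ for all $n\in\mathbb N$. *)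

(* Defs.v *)
From HB Require Import structures.
From mathcomp Require Import all_boot all_order all_algebra.
From mathcomp Require Import all_classical all_reals all_analysis.
Set Implicit Arguments. Unset Strict Implicit. Unset Printing Implicit Defensive.
Import Order.TTheory GRing.Theory Num.Theory.
Local Open Scope classical_set_scope.
Local Open Scope ring_scope.

Section ControlSystem.
Context {R : realType} {X U : metricType R} (F : X -> U -> X).

Fixpoint phi (k : nat) (x : X) (w : nat -> U) : X :=
  match k with
  | 0 => x
  | k'.+1 => F (phi k' x w) (w k')
  end.

Definition orbit_plus (x : X) : set X :=
  [set y | exists m w, y = phi m x w].

Definition control_props (D : set X) : Prop :=
  (forall x, D x -> exists w : nat -> U, forall k, D (phi k x w)) /\
  (forall x, D x -> D `<=` closure (orbit_plus x)).

Definition control_set (D : set X) : Prop :=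
  control_props D /\
  (forall D', control_props D' -> D `<=` D' -> D' = D).

Definition dist_set (y : X) (Q : set X) : R :=
  inf [set mdist y q | q in Q].

Definition nbhd_set (eps : R) (Q : set X) : set X :=
  [set y | dist_set y Q < eps].

Definition oball (x : X) (delta : R) : set X := [set y | mdist x y < delta].

Definition finitely_equi_invariant_point (Q : set X) (x : X) : Prop :=
  Q x /\
  forall eps : R, 0 < eps ->
    exists delta : R, 0 < delta /\
    exists Fs : set (nat -> U), finite_set Fs /\
      forall y, (oball x delta `&` Q) y ->
        exists2 w, Fs w & forall k, nbhd_set eps Q (phi k y w).

Definition equi_invariant_point (Q : set X) (x : X) : Prop :=
  Q x /\
  forall eps : R, 0 < eps ->
    exists delta : R, 0 < delta /\
    exists w : nat -> U,
      forall y, (oball x delta `&` Q) y ->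
        forall k, nbhd_set eps Q (phi k y w).

Definition finitely_equi_invariant (Q : set X) : Prop :=
  forall x, Q x -> finitely_equi_invariant_point Q x.

Definition equi_invariant (Q : set X) : Prop :=
  forall x, Q x -> equi_invariant_point Q x.

Definition Qnw (eps : R) (n : nat) (w : nat -> U) (Q : set X) : set X :=
  [set x | Q x /\ forall k, (k < n)%N -> nbhd_set eps Q (phi k x w)].

Definition spanning (n : nat) (eps : R) (Q : set X) (Fs : set (nat -> U)) : Prop :=
  Q = \bigcup_(w in Fs) Qnw eps n w Q.

(* r_inv(n,eps,Q) <= C, i.e. some spanning set has at most C elements *)
Definition r_inv_le (n : nat) (eps : R) (Q : set X) (C : nat) : Prop :=
  exists Fs : set (nat -> U), spanning n eps Q Fs /\ (Fs #<= `I_C)%card.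

Definition bounded_invariance_complexity (Q : set X) : Prop :=
  forall eps : R, 0 < eps ->
    exists C : nat, forall n : nat, (0 < n)%N -> r_inv_le n eps Q C.

End ControlSystem.

(* Main.v *)
Require Import Defs.
From HB Require Import structures.
From mathcomp Require Import all_boot all_order all_algebra.
From mathcomp Require Import all_classical all_reals all_analysis.
Import Order.TTheory GRing.Theory Num.Theory.
Local Open Scope classical_set_scope.
Local Open Scope ring_scope.

Section Aux.
Context {R : realType} {X U : metricType R} (F : X -> U -> X).

Lemma phi_add a b x w :
  phi F (a + b) x w = phi F b (phi F a x w) (fun n => w (a + n)%N).
Proof. by elim: b => [|b IH] /=; rewrite ?addn0 // addnS /= IH. Qed.

Lemma phi_ext k x w w' : (forall n, (n < k)%N -> w n = w' n) ->
  phi F k x w = phi F k x w'.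
Proof.
elim: k => [//|k IH] H /=; rewrite IH ?H // => n nk; apply: H.
exact: ltnW.
Qed.

Lemma phi_cont (hF : forall u : U, continuous (fun x : X => F x u)) k w :
  continuous (fun x => phi F k x w).
Proof.
elim: k => [|k IH] x /=; first exact: cvg_id.
exact: (continuous_comp (IH x) (hF (w k) _)).
Qed.

Lemma mdist_lt_tri (x y z : X) e1 e2 :
  mdist x y < e1 -> mdist y z < e2 -> mdist x z < e1 + e2.
Proof.
move=> h1 h2.
have b1 : ball x e1 y by rewrite ballEmdist.
have b2 : ball y e2 z by rewrite ballEmdist.
by have := ball_triangle b1 b2; rewrite ballEmdist.
Qed.

Lemma nbhdP (Q : set X) eps p : Q !=set0 ->
  nbhd_set eps Q p <-> exists2 q, Q q & mdist p q < eps.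
Proof.
move=> [q0 Qq0]; rewrite /nbhd_set /dist_set /=; split.
  move=> /inf_lt [|_ [q Qq <-] lt]; last by exists q.
  by exists (mdist p q0), q0.
move=> [q Qq lt]; apply: le_lt_trans lt.
apply: ge_inf; last by exists q.
by exists 0 => _ [r _ <-]; exact: mdist_ge0.
Qed.

Lemma in_nbhd (Q : set X) eps p : 0 < eps -> Q p -> nbhd_set eps Q p.
Proof.
move=> e0 Qp; apply/nbhdP; first by exists p.
by exists p => //; rewrite mdistxx.
Qed.

End Aux.


Section Aux2.
Context {R : realType} {X U : metricType R} (F : X -> U -> X).
Hypothesis hF : forall u : U, continuous (fun x : X => F x u).

Definition splice (m : nat) (w w' : nat -> U) : nat -> U :=
  fun n => if (n < m)%N then w n else w' (n - m)%N.

Lemma phi_splice_lo m w w' k x : (k <= m)%N ->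
  phi F k x (splice m w w') = phi F k x w.
Proof.
move=> km; apply: phi_ext => n nk; rewrite /splice.
by rewrite (leq_trans nk km).
Qed.

Lemma phi_splice_hi m w w' k x :
  phi F (m + k) x (splice m w w') = phi F k (phi F m x w) w'.
Proof.
rewrite phi_add (phi_splice_lo m w w' m x (leqnn m)); apply: phi_ext => n _.
by rewrite /splice ltnNge leq_addr /= addKn.
Qed.

Lemma orbit_sub_closure a b : closure (orbit_plus F b) a ->
  orbit_plus F a `<=` closure (orbit_plus F b).
Proof.
move=> cla y [n [w ->]] B nB.
have := phi_cont F hF n w a B nB.
move=> /cla [a' [[m' [w' ->]] Ba']].
exists (phi F (m' + n) b (splice m' w' w)); split; last first.
  by rewrite phi_splice_hi.
by exists (m' + n)%N, (splice m' w' w).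
Qed.

Lemma orbit_closure_trans a b : closure (orbit_plus F b) a ->
  closure (orbit_plus F a) `<=` closure (orbit_plus F b).
Proof.
move=> cla; have := closureS (orbit_sub_closure _ _ cla).
have := closed_closure (A := orbit_plus F b).
by move=> /closure_id <-.
Qed.

Lemma in_orbit x m w : orbit_plus F x (phi F m x w).
Proof. by exists m, w. Qed.

Lemma control_path Q x m w : control_set F Q -> Q x -> Q (phi F m x w) ->
  forall j, (j <= m)%N -> Q (phi F j x w).
Proof.
move=> [[Hi Hii] Hmax] Qx Qz.
set z := phi F m x w.
pose Q' := Q `|` [set phi F j x w | j in [set j | (j <= m)%N]].
suff <- : Q' = Q by move=> j jm; right; exists j.
apply: Hmax; last by move=> y Qy; left.
have xcl : forall p, Q' p -> closure (orbit_plus F p) x.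
  move=> p [Qp|[j jm <-]]; first exact: Hii.
  have zin : orbit_plus F (phi F j x w) z.
    exists (m - j)%N, (fun n => w (j + n)%N).
    by rewrite /z -phi_add subnKC.
  apply: (orbit_closure_trans _ _ (subset_closure zin)).
  exact: Hii.
split.
- move=> p [Qp|[j jm <-]].
    by have [w0 Hw0] := Hi p Qp; exists w0 => k; left.
  have [w0 Hw0] := Hi z Qz.
  exists (splice (m - j) (fun n => w (j + n)%N) w0) => k.
  have [km|km] := leqP k (m - j)%N.
    rewrite phi_splice_lo // -phi_add; right; exists (j + k)%N => //=.
    by rewrite -leq_subRL.
  rewrite -(subnKC (ltnW km)) phi_splice_hi -phi_add subnKC //.
  by left; apply: Hw0.
- move=> p Q'p y Q'y.
  apply: (orbit_closure_trans _ _ (xcl _ Q'p)).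
  case: Q'y => [Qy|[j jm <-]]; first exact: Hii.
  by apply: subset_closure; exact: in_orbit.
Qed.

End Aux2.


Lemma fin_index (T : Type) (x0 : T) (A : set T) C : (A #<= `I_C)%card ->
  exists g : nat -> T, forall a, A a -> exists2 i, (i < C)%N & g i = a.
Proof.
move=> /pfcard_geP [->|]; first by exists (fun=> x0).
move=> /surjfunPex [f ->]; exists f => _ [i iC <-]; by exists i.
Qed.

Section Aux3.
Context {R : realType} {X U : metricType R} (F : X -> U -> X).

Definition good (Q : set X) e y w := forall k, nbhd_set e Q (phi F k y w).

Definition Gprop (Q : set X) e := exists C (g : nat -> (nat -> U)),
  forall y, Q y -> exists2 i, (i < C)%N & good Q e y (g i).

Lemma G_BIC Q : (forall e, 0 < e -> Gprop Q e) -> bounded_invariance_complexity F Q.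
Proof.
move=> HG eps e0; have [C [g Hg]] := HG eps e0; exists C => n n0.
exists (g @` `I_C); split; last exact: card_image_le.
apply/seteqP; split => [y Qy|y [_ _ []//]].
have [i iC gi] := Hg y Qy; exists (g i); first by exists i.
by split => // k _; apply: gi.
Qed.

Lemma G_FE Q : (forall e, 0 < e -> Gprop Q e) -> finitely_equi_invariant F Q.
Proof.
move=> HG x Qx; split => // eps e0; have [C [g Hg]] := HG eps e0.
exists 1; split => //; exists (g @` `I_C); split.
  exact/finite_image/finite_II.
move=> y [_ Qy]; have [i iC gi] := Hg y Qy; exists (g i) => //.
Qed.

Lemma FE_G Q (w0 : nat -> U) : compact Q -> finitely_equi_invariant F Q ->
  forall e, 0 < e -> Gprop Q e.
Proof.
move=> cQ FE e e0.
pose Fil : set_system (set (nat -> U)) := fun A =>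
  exists2 S0, finite_set S0 & forall S, S0 `<=` S -> finite_set S -> A S.
have FFil : Filter Fil.
  constructor.
  - by exists set0 => //; exact: finite_set0.
  - move=> A B [S0 f0 h0] [S1 f1 h1]; exists (S0 `|` S1).
      by rewrite finite_setU.
    move=> S sS fS; split; [apply: h0 | apply: h1] => // x Sx; apply: sS.
      by left.
    by right.
  - move=> A B AB [S0 f0 h0]; exists S0 => // S sS fS; apply: AB.
    exact: h0.
pose P (S : set (nat -> U)) (y : X) :=
  Q y -> exists2 w, S w & good Q e y w.
have := (compact_near_coveringP Q).1 cQ _ Fil P FFil.
case.
  move=> x Qx.
  have [_ /(_ e e0) [d [d0 [Fs [fFs HFs]]]]] := FE x Qx.
  apply: (@filter_pair_set _ _ _ _ _ FFil (oball x d) [set S | Fs `<=` S]).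
    move=> y S yb FsS Qy.
    have [w Fw gw] := HFs y (conj yb Qy).
    by exists w => //; apply: FsS.
  split.
    by apply/nbhs_ballP; exists d => // y; rewrite ballEmdist.
  by exists Fs.
move=> S0 f0 /(_ S0 (@subset_refl _ _) f0) H.
have [n /card_eqPle [le _]] := f0.
have [g Hg] := @fin_index _ w0 _ _ le.
exists n, g => y Qy.
have [w S0w gw] := H y Qy Qy.
have [i iC gi] := Hg w S0w.
by exists i => //; rewrite gi.
Qed.

End Aux3.


Section Aux4.
Context {R : realType} {X U : metricType R} (F : X -> U -> X).

Lemma pair_cont (k : nat) (y : X) (o : {ptws nat -> U}) :
 {for o, continuous (fun w : {ptws nat -> U} => (k, y, w))}.
Proof.
have := @cvg_pair _ _ _ (nbhs o) (nbhs (k, y)) (nbhs o) _ _ _ (fun _ => (k, y)) (fun w => w) (cvg_cst _) cvg_id.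
exact.
Qed.

Lemma BIC_G Q (w0 : nat -> U) : compact [set: U] ->
  continuous (fun p : nat * X * {ptws nat -> U} => phi F p.1.1 p.1.2 p.2) ->
  Q !=set0 -> bounded_invariance_complexity F Q ->
  forall e, 0 < e -> Gprop F Q e.
Proof.
move=> cU hphi Qn BIC e e0.
have e20 : 0 < e / 2 by rewrite divr_gt0.
have [C HC] := BIC (e / 2) e20.
have : forall n, exists g : nat -> (nat -> U), forall y, Q y ->
    exists2 i, (i < C)%N & forall k, (k <= n)%N ->
      nbhd_set (e / 2) Q (phi F k y (g i)).
  move=> n; have [Fs [sp card]] := HC n.+1 isT.
  have [g Hg] := @fin_index _ w0 _ _ card; exists g => y Qy.
  have : (\bigcup_(w in Fs) Qnw F (e / 2) n.+1 w Q) y by rewrite -sp.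
  move=> [w Fw [_ Hw]]; have [i iC gi] := Hg w Fw; exists i => // k kn.
  by rewrite gi; apply: Hw.
move=> /choice [gg Hgg].
have [Uf [UfU sUf]] := @ultraFilterLemma nat \oo _.
have cpt : compact [set: {ptws nat -> U}].
  have := @tychonoff nat (fun _ => U) (fun _ => setT) (fun _ => cU).
  by congr compact; apply/seteqP; split.
have : forall i, exists p : {ptws nat -> U},
    cluster ((fun n => (gg n i : {ptws nat -> U})) @ Uf) p.
  move=> i; have [p [_ cp]] := cpt ((fun n => (gg n i : {ptws nat -> U})) @ Uf) _ filterT.
  by exists p.
move=> /choice [om Hom].
exists C, om => y Qy.
pose Nset i := [set n | forall k, (k <= n)%N ->
  nbhd_set (e / 2) Q (phi F k y (gg n i))].
have [i iC Ui] : exists2 i, (i < C)%N & Uf (Nset i).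
  apply: contrapT => hn.
  have hC : forall i, (i < C)%N -> Uf (~` Nset i).
    move=> i iC; have [Ui|//] := in_ultra_setVsetC (Nset i) UfU.
    by exfalso; apply: hn; exists i.
  have : forall j, (j <= C)%N -> Uf [set n | forall i, (i < j)%N -> ~ Nset i n].
    elim => [|j IH] jC.
      by apply: filterS (@filterT _ Uf _) => n _ i; rewrite ltn0.
    apply: filterS (filterI (IH (ltnW jC)) (hC j jC)) => n [h1 h2] i.
    by rewrite ltnS leq_eqVlt => /orP [/eqP ->|/h1].
  move=> /(_ C (leqnn C)) /filter_ex [n hn'].
  have [i iC gi] := Hgg n y Qy.
  exact: hn' iC gi.
exists i => // k.
have cont : {for om i, continuous (fun w : {ptws nat -> U} => phi F k y w)}.
  exact: (continuous_comp (pair_cont k y (om i)) (hphi (k, y, om i))).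
pose B := [set w : {ptws nat -> U} | mdist (phi F k y (om i)) (phi F k y w) < e / 2].
have nB : nbhs (om i) B.
  have : nbhs (phi F k y (om i)) [set z | mdist (phi F k y (om i)) z < e / 2].
    by apply/nbhs_ballP; exists (e / 2) => // z; rewrite ballEmdist.
  by move/cont.
pose A := (fun n => (gg n i : {ptws nat -> U})) @` (Nset i `&` [set n | (k <= n)%N]).
have UA : ((fun n => (gg n i : {ptws nat -> U})) @ Uf) A.
  have UI : Uf (Nset i `&` [set n | (k <= n)%N]).
    exact: (filterI Ui (sUf _ (nbhs_infty_ge k))).
  change (Uf [set n | A (gg n i)]).
  by apply: filterS UI => n Nn; exists n.
have [w [[n [Nn kn] <-] Bw]] := Hom i A B UA nB.
have [q Qq hq] := (nbhdP _ _ _ Qn).1 (Nn k kn).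
apply/nbhdP => //; exists q => //.
by rewrite (splitr e); apply: mdist_lt_tri Bw hq.
Qed.

End Aux4.


Lemma cover_closure {T : topologicalType} (S : nat -> set T) C (W : set T) :
  open W -> W !=set0 -> (forall y, W y -> exists2 i, (i < C)%N & S i y) ->
  exists i V, [/\ (i < C)%N, open V, V !=set0, V `<=` W & V `<=` closure (S i)].
Proof.
elim: C W => [|C IH] W oW [w0 Ww0] cov.
  by have [i] := cov _ Ww0.
have [[z [Wz nz]]|h] := pselect ((W `&` ~` closure (S C)) !=set0).
  have oW' : open (W `&` ~` closure (S C)).
    by apply: openI => //; apply: closed_openC; exact: closed_closure.
  have [] := IH (W `&` ~` closure (S C)) oW' (ex_intro _ z (conj Wz nz)).
    move=> y [Wy ny]; have [i iC Si] := cov y Wy.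
    move: iC; rewrite ltnS leq_eqVlt => /orP [/eqP ei|iC]; last by exists i.
    by exfalso; apply: ny; rewrite -ei; exact: subset_closure.
  move=> i [V [iC oV nV VW Vcl]]; exists i, V; split => //.
    exact: ltn_trans iC _.
  by move=> y /VW [].
exists C, W; split => //; first by exists w0.
move=> y Wy; apply: contrapT => ny; apply: h; exists y; split => //.
Qed.

Lemma near_all {T : topologicalType} (x : T) (P : nat -> T -> Prop) m :
  (forall j, (j < m)%N -> \forall y \near x, P j y) ->
  \forall y \near x, forall j, (j < m)%N -> P j y.
Proof.
elim: m => [|m IH] H.
  by apply: filterS (@filterT _ _ _) => y _ j; rewrite ltn0.
have h1 := IH (fun j jm => H j (ltnW jm)).
have h2 := H m (ltnSn m).
apply: filterS (filterI h1 h2) => y [a b] j.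
by rewrite ltnS leq_eqVlt => /orP [/eqP ->|/a].
Qed.

Section Aux5.
Context {R : realType} {X U : metricType R} (F : X -> U -> X).
Hypothesis hF : forall u : U, continuous (fun x : X => F x u).

Lemma G_E Q : control_set F Q -> interior Q !=set0 ->
  (forall e, 0 < e -> Gprop F Q e) -> equi_invariant F Q.
Proof.
move=> cs [z0 iz0] HG x Qx; split => // eps e0.
have Qn : Q !=set0 by exists z0; exact: interior_subset.
have e20 : 0 < eps / 2 by rewrite divr_gt0.
have [C [g Hg]] := HG (eps / 2) e20.
pose S i := [set y | Q y /\ good F Q (eps / 2) y (g i)].
have [i [V [iC oV [v0 Vv0] VW Vcl]]] := @cover_closure _ S C _ (open_interior Q)
  (ex_intro _ z0 iz0)
  (fun y Wy => let: ex_intro2 i iC gi := Hg y (interior_subset Wy) in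
               ex_intro2 _ _ i iC (conj (interior_subset Wy) gi)).
have Vgood : forall z, V z -> good F Q eps z (g i).
  move=> z Vz k.
  have nb : nbhs z [set z' | mdist (phi F k z (g i)) (phi F k z' (g i)) < eps / 2].
    have : nbhs (phi F k z (g i)) [set p | mdist (phi F k z (g i)) p < eps / 2].
      by apply/nbhs_ballP; exists (eps / 2) => // p; rewrite ballEmdist.
    by move/(phi_cont F hF k (g i) z).
  have [s [[Qs gs] hs]] := Vcl z Vz _ nb.
  have [q Qq hq] := (nbhdP _ _ _ Qn).1 (gs k).
  apply/nbhdP => //; exists q => //.
  by rewrite (splitr eps); exact: mdist_lt_tri hs hq.
have [m [w hmV]] : exists m w, V (phi F m x w).
  have : closure (orbit_plus F x) v0.
    have [[_ Hii] _] := cs.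
    by apply: (Hii x Qx v0); exact: interior_subset (VW v0 Vv0).
  move/(_ V (open_nbhs_nbhs (conj oV Vv0))) => [y [[m [w ->]] Vy]].
  by exists m, w.
have pathQ := control_path F hF Q x m w cs Qx (interior_subset (VW _ hmV)).
have hnear : \forall y \near x, V (phi F m y w) /\
    forall j, (j < m)%N -> mdist (phi F j x w) (phi F j y w) < eps.
  apply: filterI.
    exact: (phi_cont F hF m w x V (open_nbhs_nbhs (conj oV hmV))).
  apply: near_all => j _.
  have : nbhs (phi F j x w) [set p | mdist (phi F j x w) p < eps].
    by apply/nbhs_ballP; exists eps => // p; rewrite ballEmdist.
  by move/(phi_cont F hF j w x).
have [d d0 hd] := (nbhs_ballP _ _).1 hnear.
exists d; split => //.
exists (splice m w (g i)) => y [yb Qy] k.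
have [yV yc] : V (phi F m y w) /\
    forall j, (j < m)%N -> mdist (phi F j x w) (phi F j y w) < eps.
  by apply: hd; rewrite ballEmdist.
have [km|km] := ltnP k m.
  rewrite phi_splice_lo ?(ltnW km) //.
  apply/nbhdP => //; exists (phi F k x w); first exact: pathQ (ltnW km).
  by rewrite metric_sym; apply: yc.
rewrite -(subnKC km) phi_splice_hi.
exact: Vgood yV (k - m)%N.
Qed.

End Aux5.

Theorem mainTheorem4 (R : realType) (X U : metricType R) (F : X -> U -> X)
  (Q : set X) :
  compact [set: U] ->
  (forall u : U, continuous (fun x : X => F x u)) ->
  continuous (fun p : nat * X * {ptws nat -> U} => phi F p.1.1 p.1.2 p.2) ->
  compact Q ->
  control_set F Q ->
  interior Q !=set0 ->
  (equi_invariant F Q <-> finitely_equi_invariant F Q) /\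
  (finitely_equi_invariant F Q <-> bounded_invariance_complexity F Q).
Proof.
move=> cU hF hphi cQ cs hint.
have Qn : Q !=set0 by case: hint => z /interior_subset Qz; exists z.
have [w0 _] : exists w : nat -> U, True.
  case: Qn => q Qq; have [[Hi _] _] := cs; have [w _] := Hi q Qq.
  by exists w.
have FEG := FE_G F Q w0 cQ.
have GFE := G_FE F Q.
have GE := G_E F hF Q cs hint.
split; split.
- move=> E x Qx; have [_ H] := E x Qx; split => // eps e0.
  have [d [d0 [w Hw]]] := H eps e0; exists d; split => //.
  exists [set w]; split; first exact: finite_set1.
  by move=> y yb; exists w => //; exact: Hw.
- by move=> /FEG /GE.
- by move=> /FEG /G_BIC.
- by move=> /(BIC_G F Q w0 cU hphi Qn) /GFE.
Qed.
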